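(* For every $n\geq1$ and all $k_1,\dots,k_n\geq0$ there are isomorphisms of $\Sigma$-spaces \[ \mathcal{P}^{(n)}\Delta[k_1,\dots,k_n]\;\cong\;\mathcal{P}\Delta[k_1]\times\dots\times\mathcal{P}\Delta[k_n]\;\cong\;N^{\mathrm{ex}}\mathrm{Ar}[k_1]\times\dots\times N^{\mathrm{ex}}\mathrm{Ar}[k_n]. \]
   Context: Let $\Delta$ be the simplex category and let $\Sigma$ be the category obtained from $\Delta\times\Delta$ by freely adjoining a terminal object $[-1]$. A $\Sigma$-space is a functor $\Sigma^{\mathrm{op}}\to\mathcal{S}$ to spaces (e.g. simplicial sets); equivalently, a bisimplicial space $X_{\bullet,\bullet}$ together with a space $X_{-1}$ and an augmentation map $X_{-1}\to X_{0,0}$ (induced by the unique map $([0],[0])\to[-1]$). Products of $\Sigma$-spaces are taken levelwise. Let $p\colon\Sigma\to\Delta$ be the ordinal sum functor, $[-1]\mapsto[0]$ and $([a],[b])\mapsto[a+1+b]$ (on morphisms: ordinal sum of maps, and the unique map to $[0]$ for maps to $[-1]$). Let $\mathcal{P}=p^*\colon\mathcal{S}^{\Delta^{\mathrm{op}}}\to\mathcal{S}^{\Sigma^{\mathrm{op}}}$ be precomposition with $p$. For $n\geq1$ let $p^{(n)}\colon\Sigma\to\Delta^{\times n}$ be $\sigma\mapsto(p(\sigma),\dots,p(\sigma))$ and $\mathcal{P}^{(n)}=(p^{(n)})^*\colon\mathcal{S}^{(\Delta^{\mathrm{op}})^{\times n}}\to\mathcal{S}^{\Sigma^{\mathrm{op}}}$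 precomposition with $p^{(n)}$. Here $\Delta[k]$ denotes the (discrete) simplicial space represented by $[k]$, and $\Delta[k_1,\dots,k_n]$ the (discrete) $n$-fold simplicial space represented by $([k_1],\dots,[k_n])$. For $k\geq0$, let $\mathrm{Ar}[k]=[k]^{[1]}$ be the arrow category of $[k]$, i.e. the poset of pairs $(i,j)$ with $0\le i\le j\le k$, with $(i,j)\le(i',j')$ iff $i\le i'$ and $j\le j'$. Call a morphism $(i,j)\to(i,j')$ horizontal and a morphism $(i,j)\to(i',j)$ vertical; the objects $(i,i)$ are the zero objects. The exact nerve $N^{\mathrm{ex}}\mathrm{Ar}[k]$ is the (discrete) $\Sigma$-space with $N^{\mathrm{ex}}_{-1}\mathrm{Ar}[k]$ the set of zero objects $(i,i)$, and $N^{\mathrm{ex}}_{a,b}\mathrm{Ar}[k]$ the set of exact functors $F\colon[a]\times[b]\to\mathrm{Ar}[k]$, i.e. functors sending each morphism $(i,j)\to(i,j+\ell)$ of $[a]\times[b]$ to a horizontal morphism and each morphism $(i,j)\to(i+m,j)$ to a vertical morphism (all commutative squares being allowed); the bisimplicial structure is given by precomposition with maps $[a']\times[b']\to[a]\times[b]$ induced by morphisms of $\Delta\times\Delta$, and the augmentation sends a zero object to the constant functor $[0]\times[0]\to\mathrm{Ar}[k]$ at it. *)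

(* Defs.v *)
(* Sigma-sets (discrete Sigma-spaces), the functors P, P^(n),
   representables and the exact nerve of Ar[k]. *)
From mathcomp Require Import all_boot.
Set Implicit Arguments. Unset Strict Implicit. Unset Printing Implicit Defensive.

Definition monob (m n : nat) (f : {ffun 'I_m.+1 -> 'I_n.+1}) : bool :=
  [forall i : 'I_m.+1, forall j : 'I_m.+1, (i <= j) ==> (f i <= f j)].

Definition DHom (m n : nat) := {f : {ffun 'I_m.+1 -> 'I_n.+1} | monob f}.

Lemma monob_const (m n : nat) (c : 'I_n.+1) : monob [ffun _ : 'I_m.+1 => c].
Proof. by apply/forallP => i; apply/forallP => j; rewrite !ffunE leqnn implybT. Qed.

Definition dconst (m n : nat) : DHom m n := exist (@monob m n) _ (monob_const m ord0).

(* composition g o f; the raw composite is always monotone, [insubd] just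
   packages it (the default is never used). *)
Definition dcomp (m n k : nat) (g : DHom n k) (f : DHom m n) : DHom m k :=
  insubd (dconst m k) [ffun i => sval g (sval f i)].

Definition osum (a' a b' b : nat) (f : DHom a' a) (g : DHom b' b)
  : DHom (a' + 1 + b') (a + 1 + b) :=
  insubd (dconst _ _)
    [ffun i : 'I_(a' + 1 + b').+1 =>
       if (i <= a')%N then inord (sval f (inord i))
       else inord (a + 1 + sval g (inord (i - a'.+1)))].

(* ---------- The category Sigma = (Delta x Delta) with a terminal [-1] ---------- *)
Inductive Sig : Type := Sneg | Spair (a b : nat).

Definition SHom (s t : Sig) : Type :=
  match s, t with
  | Sneg, Sneg => unit
  | Spair _ _, Sneg => unit
  | Sneg, Spair _ _ => Empty_set
  | Spair a' b', Spair a b => (DHom a' a * DHom b' b)%type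
  end.

Definition pobj (s : Sig) : nat :=
  match s with Sneg => 0 | Spair a b => a + 1 + b end.

Definition pmap (s t : Sig) : SHom s t -> DHom (pobj s) (pobj t) :=
  match s, t return SHom s t -> DHom (pobj s) (pobj t) with
  | Sneg, Sneg => fun _ => dconst 0 0
  | Spair a b, Sneg => fun _ => dconst (a + 1 + b) 0
  | Sneg, Spair _ _ => fun e => match e with end
  | Spair a' b', Spair a b => fun fg => osum fg.1 fg.2
  end.

Unset Implicit Arguments.
Record SigmaSet := {
  sobj : Sig -> Type;
  sact : forall s t : Sig, SHom s t -> sobj t -> sobj s }.
Set Implicit Arguments.
Arguments sact _ {s t} _ _.

Definition SigmaIso (X Y : SigmaSet) : Prop :=
  exists (phi : forall s, sobj X s -> sobj Y s)
         (psi : forall s, sobj Y s -> sobj X s),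
    [/\ forall s, cancel (phi s) (psi s),
        forall s, cancel (psi s) (phi s) &
        forall (s t : Sig) (f : SHom s t) (x : sobj X t),
          phi s (sact X f x) = sact Y f (phi t x)].

Definition prodS (n : nat) (X : 'I_n -> SigmaSet) : SigmaSet := {|
  sobj := fun s => forall i : 'I_n, sobj (X i) s;
  sact := fun s t f x => fun i => sact (X i) f (x i) |}.

(* P Delta[k] = p^* of the representable simplicial set Delta[k] *)
Definition PDelta (k : nat) : SigmaSet := {|
  sobj := fun s => DHom (pobj s) k;
  sact := fun s t f x => dcomp x (pmap f) |}.

Definition DnHom (n : nat) (m k : 'I_n -> nat) : Type :=
  forall i : 'I_n, DHom (m i) (k i).

(* P^(n) Delta[k_1,...,k_n] = (p^(n))^* of the representable n-fold
   simplicial set; p^(n) f = (p f, ..., p f) acting componentwise *)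
Definition PnDelta (n : nat) (k : 'I_n -> nat) : SigmaSet := {|
  sobj := fun s => DnHom (fun _ => pobj s) k;
  sact := fun s t f x => fun i => dcomp (x i) (pmap f) |}.

Definition ArObj (k : nat) := {p : 'I_k.+1 * 'I_k.+1 | (p.1 <= p.2)%N}.
Definition ZeroObj (k : nat) := {x : ArObj k | (sval x).1 == (sval x).2}.

(* exact functors [a] x [b] -> Ar[k]: functors of posets sending each
   morphism (i,j) -> (i,j') to a horizontal morphism and each morphism
   (i,j) -> (i',j) to a vertical morphism *)
Definition exactb (a b k : nat) (F : {ffun 'I_a.+1 * 'I_b.+1 -> ArObj k}) : bool :=
  [&& [forall x : 'I_a.+1 * 'I_b.+1, forall y : 'I_a.+1 * 'I_b.+1,
         ((x.1 <= y.1) && (x.2 <= y.2))%N ==>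
         (((sval (F x)).1 <= (sval (F y)).1) && ((sval (F x)).2 <= (sval (F y)).2))%N],
      [forall i : 'I_a.+1, forall j : 'I_b.+1, forall j' : 'I_b.+1,
         (j <= j')%N ==> ((sval (F (i, j))).1 == (sval (F (i, j'))).1)] &
      [forall i : 'I_a.+1, forall i' : 'I_a.+1, forall j : 'I_b.+1,
         (i <= i')%N ==> ((sval (F (i, j))).2 == (sval (F (i', j))).2)]].

Definition ExF (a b k : nat) := {F : {ffun 'I_a.+1 * 'I_b.+1 -> ArObj k} | exactb F}.

Definition ar0 (k : nat) : ArObj k := exist (fun p : 'I_k.+1 * 'I_k.+1 => (p.1 <= p.2)%N) (ord0, ord0) (leqnn 0).

Lemma exactb_const (a b k : nat) (z : ArObj k) : exactb [ffun _ : 'I_a.+1 * 'I_b.+1 => z].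
Proof.
apply/and3P; split.
- by apply/forallP => x; apply/forallP => y; rewrite !ffunE !leqnn implybT.
- by apply/forallP => i; apply/forallP => j; apply/forallP => j'; rewrite !ffunE eqxx implybT.
- by apply/forallP => i; apply/forallP => i'; apply/forallP => j; rewrite !ffunE eqxx implybT.
Qed.

(* constant functor (default value; also the augmentation) *)
Definition exconst (a b k : nat) (z : ArObj k) : ExF a b k :=
  exist (@exactb a b k) _ (exactb_const a b z).

Definition NexObj (k : nat) (s : Sig) : Type :=
  match s with Sneg => ZeroObj k | Spair a b => ExF a b k end.

(* precomposition; [insubd] only packages the (always exact) composite *)
Definition NexAct (k : nat) (s t : Sig) : SHom s t -> NexObj k t -> NexObj k s :=
  match s, t return SHom s t -> NexObj k t -> NexObj k s with
  | Sneg, Sneg => fun _ z => z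
  | Spair a b, Sneg => fun _ z => exconst a b (sval z)
  | Sneg, Spair _ _ => fun e => match e with end
  | Spair a' b', Spair a b => fun fg F =>
      insubd (exconst a' b' (ar0 k))
        [ffun x : 'I_a'.+1 * 'I_b'.+1 => sval F (sval fg.1 x.1, sval fg.2 x.2)]
  end.

Definition NexAr (k : nat) : SigmaSet := {| sobj := NexObj k; sact := @NexAct k |}.

(* Main.v *)
Require Import Defs.
From mathcomp Require Import all_boot.
From Stdlib Require Import FunctionalExtensionality.
From mathcomp Require Import zify.
Set Implicit Arguments. Unset Strict Implicit.

Lemma monoP m n (x : DHom m n) (i j : 'I_m.+1) : i <= j -> sval x i <= sval x j.
Proof. by move=> h; move: (svalP x) => /forallP/(_ i)/forallP/(_ j)/implyP; apply. Qed.

Lemma dcompE m n p (g : DHom n p) (f : DHom m n) i : sval (dcomp g f) i = sval g (sval f i).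
Proof.
rewrite /dcomp val_insubd.
have -> : monob [ffun i => sval g (sval f i)].
  by apply/forallP=> u; apply/forallP=> v; apply/implyP=> h; rewrite !ffunE; apply/monoP/monoP.
by rewrite ffunE.
Qed.

Lemma dconstE m n i : sval (dconst m n) i = ord0.
Proof. by rewrite /= ffunE. Qed.

Section Os.
Variables (a' a b' b : nat) (f : DHom a' a) (g : DHom b' b).
Definition osraw := [ffun i : 'I_(a' + 1 + b').+1 =>
       if (i <= a')%N then (inord (sval f (inord i)) : 'I_(a+1+b).+1)
       else inord (a + 1 + sval g (inord (i - a'.+1)))].
Lemma osraw_mono : monob osraw.
Proof.
apply/forallP=> u; apply/forallP=> v; apply/implyP=> h; rewrite !ffunE.
have Hf : forall w : 'I_a.+1, w < (a+1+b).+1 by move=> w; have := ltn_ord w; lia.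
have Hg : forall w : 'I_b.+1, a + 1 + w < (a+1+b).+1 by move=> w; have := ltn_ord w; lia.
case: ifP => hu; case: ifP => hv; rewrite !inordK //.
- apply: monoP; rewrite !inordK //; lia.
- have := ltn_ord (sval f (inord u)); lia.
- lia.
- rewrite leq_add2l; apply: monoP; have Hu := ltn_ord u; have Hv := ltn_ord v.
  rewrite !inordK; lia.
Qed.
Lemma osumE i : sval (osum f g) i = osraw i.
Proof. by rewrite /osum val_insubd osraw_mono. Qed.
Lemma osum_l (i : 'I_a'.+1) : sval (osum f g) (inord i) = inord (sval f i).
Proof.
rewrite osumE ffunE inordK; last by have := ltn_ord i; lia.
rewrite (ltnSE (ltn_ord i)); congr (inord (sval f _)); apply: val_inj; rewrite /= inordK //.
Qed.
Lemma osum_r (j : 'I_b'.+1) : sval (osum f g) (inord (a'+1+j)) = inord (a + 1 + sval g j).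
Proof.
rewrite osumE ffunE inordK; last by have := ltn_ord j; lia.
have -> : (a' + 1 + j <= a') = false by lia.
congr (inord (_ + sval g _)); apply: val_inj; rewrite /= inordK; last by have := ltn_ord j; lia.
lia.
Qed.
End Os.

Section K.
Variable k : nat.

Definition phi0 (x : DHom 0 k) : ZeroObj k :=
  exist _ (exist _ (sval x ord0, sval x ord0) (leqnn _)) (eqxx _).
Definition psi0 (z : ZeroObj k) : DHom 0 k := exist (@monob 0 k) _ (monob_const 0 (sval (sval z)).1).

Lemma phiP_ok a b (x : DHom (a+1+b) k) (p : 'I_a.+1 * 'I_b.+1) :
  (sval x (inord p.1) <= sval x (inord (a+1+p.2)))%N.
Proof.
apply: monoP.
have H1 := ltn_ord p.1; have H2 := ltn_ord p.2; rewrite !inordK; lia.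
Qed.

Definition phiraw a b (x : DHom (a+1+b) k) : {ffun 'I_a.+1 * 'I_b.+1 -> ArObj k} :=
  [ffun p : 'I_a.+1 * 'I_b.+1 => exist _ (sval x (inord p.1), sval x (inord (a+1+p.2))) (phiP_ok x p)].

Lemma phiraw_ex a b (x : DHom (a+1+b) k) : exactb (phiraw x).
Proof.
have H1 : forall i : 'I_a.+1, i < (a+1+b).+1 by move=> w; have := ltn_ord w; lia.
have H2 : forall i : 'I_b.+1, a+1+i < (a+1+b).+1 by move=> w; have := ltn_ord w; lia.
apply/and3P; split.
- apply/forallP=> u; apply/forallP=> v; apply/implyP=> /andP[h1 h2]; rewrite !ffunE /=.
  by apply/andP; split; apply: monoP; rewrite !inordK // leq_add2l.
- by apply/forallP=> i; apply/forallP=> j; apply/forallP=> j'; rewrite !ffunE /= eqxx implybT.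
- by apply/forallP=> i; apply/forallP=> j; apply/forallP=> j'; rewrite !ffunE /= eqxx implybT.
Qed.

Definition phiP a b (x : DHom (a+1+b) k) : ExF a b k := exist (@exactb a b k) _ (phiraw_ex x).

Definition psiraw a b (F : ExF a b k) : {ffun 'I_(a+1+b).+1 -> 'I_k.+1} :=
  [ffun i : 'I_(a+1+b).+1 => if (i <= a)%N then (sval (sval F (inord i, ord0))).1
     else (sval (sval F (ord0, inord (i - a.+1)))).2].

Lemma exF1 a b (F : ExF a b k) i j : (sval (sval F (i, j))).1 = (sval (sval F (i, ord0))).1.
Proof.
by case/and3P: (svalP F) => _ /forallP/(_ i)/forallP/(_ ord0)/forallP/(_ j)/implyP/(_ isT)/eqP.
Qed.
Lemma exF2 a b (F : ExF a b k) i j : (sval (sval F (i, j))).2 = (sval (sval F (ord0, j))).2.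
Proof.
by case/and3P: (svalP F) => _ _ /forallP/(_ ord0)/forallP/(_ i)/forallP/(_ j)/implyP/(_ isT)/eqP.
Qed.
Lemma exFm a b (F : ExF a b k) (x y : 'I_a.+1 * 'I_b.+1) : x.1 <= y.1 -> x.2 <= y.2 ->
  ((sval (sval F x)).1 <= (sval (sval F y)).1) && ((sval (sval F x)).2 <= (sval (sval F y)).2).
Proof.
move=> h1 h2.
by case/and3P: (svalP F) => /forallP/(_ x)/forallP/(_ y)/implyP H _ _; apply: H; rewrite h1 h2.
Qed.

Lemma psiraw_mono a b (F : ExF a b k) : monob (psiraw F).
Proof.
apply/forallP=> u; apply/forallP=> v; apply/implyP=> h; rewrite !ffunE.
case: ifP => hu; case: ifP => hv.
- have Hl : (inord u : 'I_a.+1) <= (inord v : 'I_a.+1) by rewrite !inordK; lia.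
  by case/andP: (exFm F (x := (inord u, ord0)) (y := (inord v, ord0)) Hl (leqnn _)).
- apply: leq_trans (svalP (sval F (inord u, ord0))) _.
  rewrite exF2.
  by case/andP: (exFm F (x := (ord0, ord0)) (y := (ord0, inord (v - a.+1))) (leqnn _) (leq0n _)).
- lia.
- have Hu := ltn_ord u; have Hv := ltn_ord v.
  have Hl : (inord (u - a.+1) : 'I_b.+1) <= (inord (v - a.+1) : 'I_b.+1) by rewrite !inordK; lia.
  by case/andP: (exFm F (x := (ord0, inord (u - a.+1))) (y := (ord0, inord (v - a.+1))) (leqnn _) Hl).
Qed.

Definition psiP a b (F : ExF a b k) : DHom (a+1+b) k := exist (@monob _ _) _ (psiraw_mono F).

Definition phi (s : Sig) : DHom (pobj s) k -> NexObj k s :=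
  match s with Sneg => phi0 | Spair a b => @phiP a b end.
Definition psi (s : Sig) : NexObj k s -> DHom (pobj s) k :=
  match s with Sneg => psi0 | Spair a b => @psiP a b end.

Arguments phi : clear implicits.
Arguments psi : clear implicits.

Lemma can1 s : cancel (phi s) (psi s).
Proof.
case: s => [|a b] x; apply: val_inj; apply/ffunP; rewrite /=; move=> i; rewrite !ffunE.
  by rewrite (ord1 i).
have Hi : i < (a+1+b).+1 := ltn_ord i.
case: leqP => h; congr (sval x _); apply: val_inj; rewrite /= !inordK //; lia.
Qed.

Lemma can2 s : cancel (psi s) (phi s).
Proof.
case: s => [|a b] x.
  case: x => [[[u v] h] /= e]; apply: val_inj; apply: val_inj => /=.
  by rewrite ffunE; move/eqP: e => /= <-.
apply: val_inj; apply/ffunP => [[i j]]; apply: val_inj; rewrite /= !ffunE /=.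
have Hi := ltn_ord i; have Hj := ltn_ord j.
rewrite !ffunE !inordK; try lia.
rewrite (_ : i <= a = true); last lia.
rewrite (_ : a + 1 + j <= a = false); last lia.
have -> : (inord i : 'I_a.+1) = i by apply: val_inj; rewrite /= inordK.
have -> : (inord (a + 1 + j - a.+1) : 'I_b.+1) = j by apply: val_inj; rewrite /= inordK; lia.
rewrite -(exF1 x i j) -(exF2 x i j).
by case: (sval (sval x (i, j))).
Qed.
Lemma natur (s t : Sig) (f : SHom s t) (x : DHom (pobj t) k) :
  phi s (sact (PDelta k) f x) = sact (NexAr k) f (phi t x).
Proof.
case: s f => [|a' b']; case: t x => [|a b] x f //=.
- have -> : dcomp x (dconst 0 0) = x.
    by apply: val_inj; apply/ffunP => i; rewrite dcompE dconstE (ord1 i).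
  by [].
- apply: val_inj; apply/ffunP => p; apply: val_inj; rewrite /= !ffunE /= !dcompE !dconstE.
  by [].
- case: f => f g /=.
  set R := [ffun _ => _].
  have E : R = sval (phiP (dcomp x (osum f g))).
    apply/ffunP => p; rewrite !ffunE; apply: val_inj; rewrite /= !dcompE.
    by rewrite osum_l osum_r.
  by rewrite E valKd.
Qed.
End K.

Theorem mainTheorem1 (n : nat) (k : 'I_n -> nat) : (1 <= n)%N ->
  SigmaIso (PnDelta k) (prodS (fun i => PDelta (k i))) /\
  SigmaIso (prodS (fun i => PDelta (k i))) (prodS (fun i => NexAr (k i))).
Proof.
move=> _; split.
  by exists (fun s x => x), (fun s x => x); split.
exists (fun s x => fun i => @phi (k i) s (x i)), (fun s x => fun i => @psi (k i) s (x i)); split.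
- by move=> s x; apply: functional_extensionality_dep => i; rewrite can1.
- by move=> s x; apply: functional_extensionality_dep => i; rewrite can2.
- by move=> s t f x; apply: functional_extensionality_dep => i; rewrite /= natur.
Qed.
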